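(* Let $\Lambda$ be a countable index set, $\overline{a},\overline{r}$ sequences of positive reals indexed by $\Lambda$, $t\in(0,2)$, $x^+\in k_t$ and $\alpha>0$. Let $\Lambda_\alpha=\{j\in\Lambda:\overline{a}_j^{-2}\overline{r}_j\alpha<|x^+_j|\}$ and let $P_\alpha:\mathbb{R}^\Lambda\to\mathbb{R}^\Lambda$ be the coordinate projection $(P_\alpha x)_j=x_j$ for $j\in\Lambda_\alpha$ and $(P_\alpha x)_j=0$ otherwise. Then \[\|P_\alpha x\|_{\overline{r},1}\le\|x^+\|_{k_t}^{t/2}\,\alpha^{-t/2}\,\|x\|_{\overline{a},2}\quad\text{for all } x\in\ell^1_{\overline{a}}.\]
   Context: For a sequence $\omega$ of positive reals and $p\in(0,\infty)$, $\|x\|_{\omega,p}=\left(\sum_{j\in\Lambda}\omega_j^p|x_j|^p\right)^{1/p}$ and $\ell^p_\omega=\{x\in\mathbb{R}^\Lambda:\|x\|_{\omega,p}<\infty\}$. For $t\in(0,2)$, $k_t=\{x\in\mathbb{R}^\Lambda:\|x\|_{k_t}<\infty\}$ with $\|x\|_{k_t}=\sup_{\alpha>0}\alpha\left(\sum_{j\in\Lambda}\overline{a}_j^{-2}\overline{r}_j^2\mathbf{1}_{\{\overline{a}_j^{-2}\overline{r}_j\alpha<|x_j|\}}\right)^{1/t}$. *)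

(* Defs.v *)
From HB Require Import structures.
From mathcomp Require Import all_boot all_order all_algebra.
From mathcomp Require Import all_classical all_reals all_analysis.
Set Implicit Arguments. Unset Strict Implicit. Unset Printing Implicit Defensive.
Import Order.TTheory GRing.Theory Num.Theory.
Local Open Scope classical_set_scope.
Local Open Scope ring_scope.

Definition wnorm {R : realType} {L : countType} (w : L -> R) (p : R) (x : L -> R)
  : \bar R :=
  poweR (esum [set: L] (fun j => (((w j) `^ p * `|x j| `^ p)%R)%:E)) (p^-1).

Definition in_lw {R : realType} {L : countType} (w : L -> R) (p : R) (x : L -> R) :=
  (wnorm w p x < +oo)%E.

Definition Lam {R : realType} {L : countType} (a r : L -> R) (alpha : R) (x : L -> R)
  : set L := [set j | (a j)^-2 * r j * alpha < `|x j| ].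

Definition ktnorm {R : realType} {L : countType} (a r : L -> R) (t : R) (x : L -> R)
  : \bar R :=
  ereal_sup [set (alpha%:E * poweR (esum [set: L]
        (fun j => (((a j)^-2 * (r j)^+2 * (\1_(Lam a r alpha x) j : R))%R)%:E)) (t^-1))%E
      | alpha in [set alpha : R | 0 < alpha]].

Definition in_kt {R : realType} {L : countType} (a r : L -> R) (t : R) (x : L -> R) :=
  (ktnorm a r t x < +oo)%E.

Definition Pproj {R : realType} {L : countType} (S : set L) (x : L -> R) : L -> R :=
  fun j => if `[< S j >] then x j else 0.

(* Main.v *)
Require Import Defs.
From HB Require Import structures.
From mathcomp Require Import all_boot all_order all_algebra.
From mathcomp Require Import all_classical all_reals all_analysis.
From mathcomp Require Import ring lra.
Import Order.TTheory GRing.Theory Num.Theory.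
Local Open Scope ring_scope.

Lemma esumZle (R : realType) (L : choiceType) (c : R) (f : L -> R) :
  0 <= c -> (forall j, 0 <= f j) ->
  (esum [set: L] (fun j => (c * f j)%:E) <= c%:E * esum [set: L] (fun j => (f j)%:E))%E.
Proof.
move=> c0 f0; apply: ge_ereal_sup => _ [X [finX _] <-].
rewrite (eq_fsbigr (fun j => c%:E * (f j)%:E)%E); last by move=> j _; rewrite EFinM.
rewrite -ge0_mule_fsumr; last by move=> j; rewrite lee_fin.
apply: lee_wpmul2l; first by rewrite lee_fin.
by apply: ereal_sup_ubound; exists X.
Qed.

Lemma amgm (R : realType) (l p q : R) : 0 < l -> p * q <= l / 2 * p ^+ 2 + l^-1 / 2 * q ^+ 2.
Proof.
move=> l0.
have h : 0 <= (l * p - q) ^+ 2 / (2 * l) by apply: divr_ge0; [exact: sqr_ge0| nra].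
have e : (l * p - q) ^+ 2 / (2 * l) = l / 2 * p ^+ 2 + l^-1 / 2 * q ^+ 2 - p * q.
  by field; rewrite gt_eqF.
by rewrite -subr_ge0 -e.
Qed.

Lemma sqrt_bound (R : realType) (u s tau : R) : 0 <= u -> 0 < s -> 0 <= tau ->
  (forall l, 0 < l -> u <= l / 2 * s + l^-1 / 2 * tau) -> u <= Num.sqrt s * Num.sqrt tau.
Proof.
move=> u0 s0 t0 H.
have ss : 0 < Num.sqrt s by rewrite sqrtr_gt0.
have [tz|tp] := eqVneq tau 0.
  rewrite tz sqrtr0 mulr0; subst tau.
  rewrite le_eqVlt in u0; case/orP: u0 => [/eqP<-//|up].
  have := H (u / s) (divr_gt0 up s0); rewrite mulr0 addr0.
  have -> : u / s / 2 * s = u / 2 by field; rewrite gt_eqF.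
  lra.
have tq : 0 < Num.sqrt tau by rewrite sqrtr_gt0 lt_def tp t0.
have := H (Num.sqrt tau / Num.sqrt s) (divr_gt0 tq ss).
have -> : Num.sqrt tau / Num.sqrt s / 2 * s + (Num.sqrt tau / Num.sqrt s)^-1 / 2 * tau
   = Num.sqrt s * Num.sqrt tau.
  rewrite -{2}(sqr_sqrtr (ltW s0)) -{3}(sqr_sqrtr t0).
  by field; rewrite !gt_eqF.
done.
Qed.

Lemma ptwise (R : realType) (l a r x : R) (b : bool) : 0 < l -> 0 < a -> 0 < r ->
  r * `|(if b then x else 0)| <=
  l / 2 * (a^-2 * r ^+ 2 * b%:R) + l^-1 / 2 * (a `^ 2 * `|x| `^ 2).
Proof.
move=> l0 a0 r0.
rewrite (powR_mulrn 2 (ltW a0)) (powR_mulrn 2 (normr_ge0 x)).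
case: b => /=.
  have := @amgm _ l (r / a) (a * `|x|) l0.
  have -> : r / a * (a * `|x|) = r * `|x| by field; rewrite gt_eqF.
  have -> : (r / a) ^+ 2 = a^-2 * r ^+ 2 * 1 by rewrite mulr1 expr_div_n mulrC.
  by rewrite exprMn.
rewrite normr0 mulr0 mulr0 mulr0 add0r.
apply: mulr_ge0; first by apply: divr_ge0; [rewrite invr_ge0 ltW|].
by apply: mulr_ge0; [apply: exprn_ge0; exact: ltW| exact: sqr_ge0].
Qed.

Theorem lemma4p1 (R : realType) (L : countType) (a r : L -> R)
  (ha : forall j, 0 < a j) (hr : forall j, 0 < r j)
  (t : R) (ht0 : 0 < t) (ht2 : t < 2)
  (xp : L -> R) (hxp : in_kt a r t xp)
  (alpha : R) (halpha : 0 < alpha) :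
  forall x : L -> R, in_lw a 1 x ->
    (wnorm r 1 (Pproj (Lam a r alpha xp) x)
      <= poweR (ktnorm a r t xp) (t / 2) * (alpha `^ (- (t / 2)))%:E * wnorm a 2 x)%E.
Proof.
move=> x _.
set Lm := Lam a r alpha xp.
set g := fun j => (a j)^-2 * (r j)^+2 * (\1_Lm j : R).
set S := esum [set: L] (fun j => (g j)%:E).
have g0 : forall j, 0 <= g j.
  move=> j; rewrite /g; apply: mulr_ge0; last by rewrite indicE.
  by apply: mulr_ge0; [rewrite invr_ge0; apply: exprn_ge0; exact: ltW | exact: sqr_ge0].
have S0 : (0 <= S)%E by apply: esum_ge0 => j _; rewrite lee_fin.
have hK : (alpha%:E * poweR S t^-1 <= ktnorm a r t xp)%E.
  by apply: ereal_sup_ubound; exists alpha.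
have K0 : (0 <= ktnorm a r t xp)%E.
  by apply: le_trans hK; apply: mule_ge0; [rewrite lee_fin ltW | exact: poweR_ge0].
have [k Ke] : exists k, ktnorm a r t xp = k%:E.
  move: K0 hxp; rewrite /in_kt; case: (ktnorm a r t xp) => // k _ _; by exists k.
have k0 : 0 <= k by rewrite -lee_fin -Ke.
have [s Se] : exists s, S = s%:E.
  move: S0 hK; rewrite Ke; case: S => // [s _ _|_]; first by exists s.
  rewrite poweRyr ?invr_eq0 ?gt_eqF// gt0_muley ?lte_fin//.
have s0 : 0 <= s by rewrite -lee_fin -Se.
have hks : alpha * s `^ t^-1 <= k.
  by move: hK; rewrite Se Ke poweR_EFin -EFinM lee_fin.
have hreal : Num.sqrt s <= k `^ (t / 2) * alpha `^ (- (t / 2)).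
  have ap : 0 < alpha `^ (t / 2) by apply: powR_gt0.
  rewrite powRN ler_pdivlMr//.
  have := @ge0_ler_powR R (t / 2) (ltW (divr_gt0 ht0 (ltr0Sn R 1))) (alpha * s `^ t^-1) k.
  rewrite !nnegrE => H.
  have {}H := H (mulr_ge0 (ltW halpha) (powR_ge0 _ _)) k0 hks.
  apply: le_trans H; rewrite powRM ?(ltW halpha) ?powR_ge0// -powRrM.
  have -> : t^-1 * (t / 2) = 2^-1 by field; rewrite gt_eqF.
  by rewrite powR12_sqrt// mulrC.
set U := esum [set: L] (fun j => ((r j) `^ 1 * `|Pproj Lm x j| `^ 1)%:E).
set T := esum [set: L] (fun j => ((a j) `^ 2 * `|x j| `^ 2)%:E).
have U0 : (0 <= U)%E by apply: esum_ge0 => j _; rewrite lee_fin; apply: mulr_ge0; exact: powR_ge0.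
have T0 : (0 <= T)%E by apply: esum_ge0 => j _; rewrite lee_fin; apply: mulr_ge0; exact: powR_ge0.
have -> : wnorm r 1 (Pproj Lm x) = U by rewrite /wnorm invr1 poweRe1.
have -> : wnorm a 2 x = poweR T 2^-1 by [].
have RHS0 : (0 <= poweR (ktnorm a r t xp) (t / 2) * (alpha `^ (- (t / 2)))%:E * poweR T 2^-1)%E.
  by apply: mule_ge0; [apply: mule_ge0; [exact: poweR_ge0| rewrite lee_fin powR_ge0]| exact: poweR_ge0].
have [sz|sp] := eqVneq s 0.
  suff -> : U = 0%E by [].
  apply: esum1 => j _.
  rewrite /Pproj; case: asboolP => [Lj|_]; last by rewrite normr0 powR0 ?oner_neq0// mulr0.
  exfalso.
  have : ((g j)%:E <= S)%E.
    apply: esum_ge; exists [set j]%classic; first by split; [exact: finite_set1|].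
    by rewrite fsbig_set1.
  rewrite Se sz lee_fin /g indicE mem_set// mulr1 => H.
  have : 0 < (a j)^-2 * (r j)^+2.
    by apply: mulr_gt0; [rewrite invr_gt0; apply: exprn_gt0 | apply: exprn_gt0].
  by rewrite ltNge H.
have spos : 0 < s by rewrite lt_def sp s0.
suff hU : (U <= (Num.sqrt s)%:E * poweR T 2^-1)%E.
  apply: le_trans hU _; apply: lee_wpmul2r; first exact: poweR_ge0.
  by rewrite Ke poweR_EFin -EFinM lee_fin.
have : (T = +oo)%E \/ exists tau, T = tau%:E.
  by clear RHS0; move: T0; case: T => [tau _|_|//]; [right; exists tau|left].
case=> [Ty | [tau Te]].
  by rewrite Ty poweRyr ?invr_eq0 ?pnatr_eq0 // gt0_muley ?lte_fin ?sqrtr_gt0 // leey.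
have tau0 : 0 <= tau by rewrite -lee_fin -Te.
rewrite Te poweR_EFin powR12_sqrt // -EFinM.
have key : forall l, 0 < l -> (U <= (l/2*s + l^-1/2*tau)%:E)%E.
  move=> l l0.
  have c1 : 0 <= l / 2 by apply: divr_ge0; [exact: ltW|].
  have c2 : 0 <= l^-1 / 2 by apply: divr_ge0; [rewrite invr_ge0; exact: ltW|].
  apply: (@le_trans _ _ (esum [set: L] (fun j => (l/2 * g j + l^-1/2 * ((a j) `^ 2 * `|x j| `^ 2))%:E))).
    apply: le_esum => j _; rewrite lee_fin powRr1 ?(ltW (hr j)) // powRr1 //.
    rewrite /Pproj /g indicE.
    have -> : `[< Lm j >] = (j \in Lm) by apply/asboolP/idP; rewrite inE.
    exact: ptwise.
  rewrite (eq_esum (b := fun j => ((l/2 * g j)%:E + (l^-1/2 * ((a j) `^ 2 * `|x j| `^ 2))%:E)%E)); last by move=> j _; rewrite EFinD.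
  rewrite esumD; last 2 first.
      by move=> j _; rewrite lee_fin mulr_ge0.
    by move=> j _; rewrite lee_fin mulr_ge0 // mulr_ge0 // powR_ge0.
  rewrite EFinD; apply: leeD.
    apply: (le_trans (@esumZle _ _ (l/2) g c1 g0)).
    by rewrite -/S Se -EFinM.
  apply: (le_trans (@esumZle _ _ (l^-1/2) (fun j => (a j) `^ 2 * `|x j| `^ 2) c2 _)).
    by move=> j; rewrite mulr_ge0 // powR_ge0.
  by rewrite -/T Te -EFinM.
have [mu Ue] : exists mu, U = mu%:E.
  have k1 := key 1 ltr01.
  by clear key RHS0; move: U0 k1; case: U => // mu _ _; exists mu.
rewrite Ue lee_fin; apply: sqrt_bound => // [|l l0]; first by rewrite -lee_fin -Ue.
by rewrite -lee_fin -Ue key.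
Qed.
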